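(* Let $1\le p<\infty$, $N\ge2$, and for $1\le i\le N$ let $T_i=T_{f_i,\omega^{(i)}}$ be unilateral pseudo-shifts on $\ell^p(\mathbb{N})$ with maps $f_i$ and weights $\omega^{(i)}=(w^{(i)}_{f_i(m)})_m$; let $W^{(i)}_{m,n}=\prod_{\nu=1}^nw^{(i)}_{f_i^\nu(m)}$. The following are equivalent: (i) $T_1,\dots,T_N$ are d-weakly mixing. (ii) $T_1,\dots,T_N$ satisfy the Disjoint Hypercyclicity Criterion. (iii) For each $R\in\mathbb{N}$, the direct sums $\oplus_{r=1}^RT_1,\dots,\oplus_{r=1}^RT_N$ satisfy the Disjoint Blow-up/Collapse Criterion. (iv) There is a strictly increasing sequence $(n_k)$ of positive integers such that (a) $|W^{(i)}_{m,n_k}|\to\infty$ as $k\to\infty$ for all $m\in\mathbb{N}$, $1\le i\le N$; and (b) for each $\epsilon>0$ and $K,M\in\mathbb{N}$ there is $k\ge K$ such that for all $1\le i,\ell\le N$ with $i\ne\ell$: $f_\ell^{n_k}([M])\cap f_i^{n_k}([M])=\emptyset$ and $\left|\frac{W^{(i)}_{f_i^{-n_k}(j),n_k}}{W^{(\ell)}_{f_\ell^{-n_k}(j),n_k}}\right|<\epsilon$ whenever $j\in f_\ell^{n_k}([M])\cap f_i^{n_k}(\mathbb{N}\setminus[M])$.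
   Context: $\mathbb{N}=\{1,2,\dots\}$; $\{e_m\}$ is the canonical basis of $\ell^p(\mathbb{N})$ over $\mathbb{K}\in\{\mathbb{R},\mathbb{C}\}$. For a strictly increasing $f:\mathbb{N}\to\mathbb{N}$ with $f(1)>1$ and a bounded, nonzero sequence of scalars $\omega=(w_{f(m)})_{m}$, $T_{f,\omega}(\sum_m\alpha_me_m)=\sum_mw_{f(m)}\alpha_{f(m)}e_m$. $[M]=\{1,\dots,M\}$, $f^n$ is the $n$-fold composition, $f(A)=\{f(m):m\in A\}$, $f^{-n}$ the inverse of $f^n$ on $f^n(\mathbb{N})$. For operators $S_1,\dots,S_N$ on a Banach space $Y$: they are d-topologically transitive if for all non-empty open $V_0,U_1,\dots,U_N\subset Y$ there is $n$ with $V_0\cap S_1^{-n}(U_1)\cap\cdots\cap S_N^{-n}(U_N)\ne\emptyset$; they are d-weakly mixing if $S_1\oplus S_1,\dots,S_N\oplus S_N$ are d-topologically transitive. They satisfy the Disjoint Hypercyclicity Criterion if there exist a strictly increasing sequence $(n_k)$, dense subsets $Y_0,Y_1,\dots,Y_N$ of $Y$ and maps $S_{j,k}:Y_j\to Y$ ($1\le j\le N$, $k\in\mathbb{N}$) with: $S_i^{n_k}\to0$ pointwise on $Y_0$; $S_{j,k}\to0$ pointwise on $Y_j$; and $S_i^{n_k}S_{j,k}-\delta_{i,j}\mathrm{Id}\to0$ pointwise on $Y_j$, for all $1\le i,j\le N$. They satisfy the Disjoint Blow-up/Collapse Criterion if there exist a strictly increasing $(n_k)$, a dense $Y_0\subset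 Y$ and maps $S_k:\oplus_{i=1}^NY_0\to Y$ with $S_i^{n_k}y\to0$ for all $y\in Y_0$, $1\le i\le N$, and such that for each $\epsilon>0$, $K\in\mathbb{N}$, $y_1,\dots,y_N\in Y_0$ there is $k\ge K$ with $\|S_k(y_1,\dots,y_N)\|<\epsilon$ and $\|S_i^{n_k}S_k(y_1,\dots,y_N)-y_i\|<\epsilon$ for all $i$. *)

(* Defs.v *)
From mathcomp Require Import all_boot all_algebra.
From mathcomp Require Import all_classical all_reals all_analysis.
From mathcomp.real_closed Require Import complex.
Set Implicit Arguments. Unset Strict Implicit. Unset Printing Implicit Defensive.
Import GRing.Theory Num.Theory.
Local Open Scope ring_scope.
Local Open Scope classical_set_scope.

Section Generic.
Variables (R : realType) (V : zmodType) (Y : set V) (nrm : V -> R).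

Definition tends0 (u : nat -> R) : Prop :=
  forall e : R, 0 < e -> exists K : nat, forall k, (K <= k)%N -> `|u k| < e.

Definition openY (U : set V) : Prop :=
  U `<=` Y /\
  forall x, U x -> exists2 e : R, 0 < e & forall y, Y y -> nrm (y - x) < e -> U y.

Definition denseY (D : set V) : Prop :=
  D `<=` Y /\
  forall x, Y x -> forall e : R, 0 < e -> exists2 y, D y & nrm (x - y) < e.

Definition incr_seq (n : nat -> nat) : Prop :=
  (0 < n 0)%N /\ forall k, (n k < n k.+1)%N.

Definition d_top_transitive (N : nat) (S : 'I_N -> V -> V) : Prop :=
  forall (V0 : set V) (U : 'I_N -> set V),
    openY V0 -> V0 !=set0 -> (forall i, openY (U i)) -> (forall i, U i !=set0) ->
    exists n : nat, (0 < n)%N /\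
      exists y, V0 y /\ forall i, U i (iter n (S i) y).

Definition DHC (N : nat) (S : 'I_N -> V -> V) : Prop :=
  exists n : nat -> nat, incr_seq n /\
  exists (Y0 : set V) (Yj : 'I_N -> set V) (Sjk : 'I_N -> nat -> V -> V),
    denseY Y0 /\ (forall j, denseY (Yj j)) /\
    (forall j k y, Yj j y -> Y (Sjk j k y)) /\
    (forall i y, Y0 y -> tends0 (fun k => nrm (iter (n k) (S i) y))) /\
    (forall j y, Yj j y -> tends0 (fun k => nrm (Sjk j k y))) /\
    (forall i j y, Yj j y ->
        tends0 (fun k => nrm (iter (n k) (S i) (Sjk j k y)
                              - (if i == j then y else 0)))).

(* Disjoint Blow-up/Collapse Criterion; an element of (+)_{i=1}^N Y0 is
   a family y : 'I_N -> V with y i in Y0 *)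
Definition DBC (N : nat) (S : 'I_N -> V -> V) : Prop :=
  exists n : nat -> nat, incr_seq n /\
  exists (Y0 : set V) (Sk : nat -> ('I_N -> V) -> V),
    denseY Y0 /\
    (forall k (y : 'I_N -> V), (forall i, Y0 (y i)) -> Y (Sk k y)) /\
    (forall i y, Y0 y -> tends0 (fun k => nrm (iter (n k) (S i) y))) /\
    (forall e : R, 0 < e -> forall (K : nat) (y : 'I_N -> V), (forall i, Y0 (y i)) ->
       exists k, (K <= k)%N /\ nrm (Sk k y) < e /\
                 forall i, nrm (iter (n k) (S i) (Sk k y) - y i) < e).

End Generic.

Section DirectSum.
Variables (R : realType) (V : zmodType).

Definition dsumY (Y : set V) (r : nat) : set {ffun 'I_r -> V} :=
  fun y => forall j, Y (y j).

Definition dsum_nrm (nrm : V -> R) (r : nat) (y : {ffun 'I_r -> V}) : R :=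
  \big[Num.max/0]_(j < r) nrm (y j).

Definition dsum_op (r : nat) (S : V -> V) (y : {ffun 'I_r -> V}) : {ffun 'I_r -> V} :=
  [ffun j => S (y j)].


Definition d_weakly_mixing (Y : set V) (nrm : V -> R) (N : nat) (S : 'I_N -> V -> V) :=
  d_top_transitive (@dsumY Y 2) (@dsum_nrm nrm 2) (fun i => @dsum_op 2 (S i)).

End DirectSum.

Arguments dsumY {V} Y r.
Arguments dsum_nrm {R V} nrm r y.
Arguments dsum_op {V} r S y.

Definition cmod (R : realType) (z : R[i]) : R :=
  let: Complex a b := z in Num.sqrt (a ^+ 2 + b ^+ 2).

Inductive is_R_or_C (R : realType) : forall K : fieldType, (K -> R) -> Prop :=
  | scalars_R : @is_R_or_C R R (fun x : R => `|x|)
  | scalars_C : @is_R_or_C R R[i] (@cmod R).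

(* l^p(N) and unilateral pseudo-shifts.  Indices are 0-based: the Rocq *)
(* index m corresponds to the paper's index m+1.                       *)
Section LP.
Variables (R : realType) (K : fieldType) (absK : K -> R) (p : R).

Definition lp_psum (x : nat -> K) (n : nat) : R :=
  \sum_(m < n) (absK (x m)) `^ p.

Definition in_lp (x : nat -> K) : Prop := exists B : R, forall n, lp_psum x n <= B.

Definition lp_norm (x : nat -> K) : R := (sup (range (lp_psum x))) `^ (p^-1).

Definition pseudo_shift (f : nat -> nat) (w : nat -> K) (x : nat -> K) : nat -> K :=
  fun m => w (f m) * x (f m).

Definition pseudo_shift_data (f : nat -> nat) (w : nat -> K) : Prop :=
  (forall m, (f m < f m.+1)%N) /\ (0 < f 0)%N /\
  (exists B : R, forall m, absK (w (f m)) <= B) /\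
  (forall m, w (f m) != 0).

Definition Wprod (f : nat -> nat) (w : nat -> K) (m n : nat) : K :=
  \prod_(1 <= nu < n.+1) w (iter nu f m).

End LP.

Definition cond_iv (R : realType) (K : fieldType) (absK : K -> R) (N : nat)
    (f : 'I_N -> nat -> nat) (w : 'I_N -> nat -> K) : Prop :=
  exists n : nat -> nat, incr_seq n /\
  (forall (i : 'I_N) (m : nat) (B : R), exists K0 : nat, forall k, (K0 <= k)%N ->
       B < absK (Wprod (f i) (w i) m (n k))) /\
  (* (b) ; [M] = {0,...,M-1} 0-based *)
  (forall e : R, 0 < e -> forall K0 M : nat, exists k, (K0 <= k)%N /\
     forall i l : 'I_N, i != l ->
       (forall a b, (a < M)%N -> (b < M)%N ->
            iter (n k) (f l) a <> iter (n k) (f i) b) /\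
       (forall a b, (a < M)%N -> (M <= b)%N ->
            iter (n k) (f l) a = iter (n k) (f i) b ->
            absK (Wprod (f i) (w i) b (n k) / Wprod (f l) (w l) a (n k)) < e)).

(* Main.v *)
Require Import Defs.
From mathcomp Require Import all_boot all_algebra.
From mathcomp Require Import all_classical all_reals all_analysis.
From mathcomp.real_closed Require Import complex.
From mathcomp Require Import ring lra.
Import GRing.Theory Num.Theory.
Import order.Order.TTheory.
Local Open Scope ring_scope.
Local Open Scope classical_set_scope.
Set Implicit Arguments. Unset Strict Implicit. Unset Printing Implicit Defensive.

Record absP (R : realType) (K : fieldType) (absK : K -> R) : Prop := AbsP {
 absK_ge0 : forall a, 0 <= absK a;
 absKD : forall a b, absK (a + b) <= absK a + absK b;
 absKM : forall a b, absK (a * b) = absK a * absK b;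
 absK_eq0 : forall a, absK a = 0 -> a = 0;
 absK0 : absK 0 = 0;
 absKN : forall a, absK (- a) = absK a;
 absK1 : absK 1 = 1;
 absKn : forall n : nat, absK n%:R = n%:R }.

Lemma cmod_normc (R : realType) (z : R[i]) : cmod z = Normc.normc z.
Proof. by case: z. Qed.

Lemma absP_of (R : realType) (K : fieldType) (absK : K -> R) :
  is_R_or_C absK -> absP absK.
Proof.
case.
  split; [exact: normr_ge0|exact: ler_normD|exact: normrM|
          by move=> a /eqP; rewrite normr_eq0 => /eqP|exact: normr0|
          exact: normrN|exact: normr1|by move=> n; rewrite normr_nat].
split=> [a|a b|a b|a||a||n]; rewrite ?cmod_normc.
- by case: a => x y /=; exact: sqrtr_ge0.
- exact: le_normcD.
- exact: Normc.normcM.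
- exact: Normc.eq0_normc.
- exact: Normc.normc0.
- exact: normcN.
- exact: Normc.normc1.
- by rewrite -[n%:R]/(1 *+ n) normcMn Normc.normc1.
Qed.

Lemma sum_single (R : realType) (T : nat) (a : nat) (F : nat -> R) :
  \sum_(m < T) (if (m : nat) == a then F m else 0) = if (a < T)%N then F a else 0.
Proof.
elim: T => [|T IH]; first by rewrite big_ord0.
rewrite big_ord_recr /= IH.
case: (ltnP a T) => [aT|Ta].
  by rewrite (ltn_trans aT (ltnSn T)) (gtn_eqF aT) addr0.
case: eqP => [->|/eqP aneq]; first by rewrite ltnSn add0r.
have -> : (a < T.+1)%N = false.
  by rewrite ltnS; apply/negbTE; rewrite -ltnNge ltn_neqAle aneq Ta.
by rewrite addr0.
Qed.

Section LP.
Variables (R : realType) (K : fieldType) (absK : K -> R) (p : R).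
Hypothesis hA : absP absK.
Hypothesis hp : 1 <= p.
Local Notation psum := (lp_psum absK p).
Local Notation Y := (in_lp absK p).
Local Notation nrm := (lp_norm absK p).
Definition Psi x := sup (range (psum x)).

Lemma p_gt0 : 0 < p. Proof. exact: (lt_le_trans ltr01 hp). Qed.
Lemma p_neq0 : p != 0. Proof. by rewrite gt_eqF // p_gt0. Qed.

Lemma powRK a : 0 <= a -> (a `^ p) `^ p^-1 = a.
Proof. by move=> a0; rewrite -powRrM mulfV ?p_neq0 // powRr1. Qed.
Lemma powRK' a : 0 <= a -> (a `^ p^-1) `^ p = a.
Proof. by move=> a0; rewrite -powRrM mulVf ?p_neq0 // powRr1. Qed.

Lemma powR_le a b : 0 <= a -> a <= b -> a `^ p <= b `^ p.
Proof.
move=> a0 ab; apply: (ge0_ler_powR (ltW p_gt0)) => //; rewrite nnegrE //.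
exact: le_trans ab.
Qed.
Lemma powR_lt a b : 0 <= a -> a < b -> a `^ p < b `^ p.
Proof.
move=> a0 ab; apply: (gt0_ltr_powR p_gt0) => //; rewrite nnegrE //.
exact: le_trans (ltW ab).
Qed.
Lemma powRi_le a b : 0 <= a -> a <= b -> a `^ p^-1 <= b `^ p^-1.
Proof.
move=> a0 ab; apply: (ge0_ler_powR (ltW _)) => //; rewrite ?invr_gt0 ?p_gt0 // nnegrE //.
exact: le_trans ab.
Qed.
Lemma powRi_lt a b : 0 <= a -> a < b -> a `^ p^-1 < b `^ p^-1.
Proof.
move=> a0 ab; apply: (gt0_ltr_powR _) => //; rewrite ?invr_gt0 ?p_gt0 // nnegrE //.
exact: le_trans (ltW ab).
Qed.

Lemma psum_ge0 x n : 0 <= psum x n.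
Proof. by apply: sumr_ge0 => i _; exact: powR_ge0. Qed.

Lemma psumS x n : psum x n.+1 = psum x n + absK (x n) `^ p.
Proof. by rewrite /lp_psum big_ord_recr. Qed.

Lemma psum_mono x m n : (m <= n)%N -> psum x m <= psum x n.
Proof.
move=> /subnK <-; elim: (n - m)%N => [|k IH]; first by rewrite add0n.
by rewrite addSn psumS (le_trans IH) // lerDl powR_ge0.
Qed.

Lemma has_sup_psum x : Y x -> has_sup (range (psum x)).
Proof.
case=> B hB; split; first by exists (psum x 0), 0%N.
by exists B => _ [n _ <-].
Qed.

Lemma psum_le_Psi x n : Y x -> psum x n <= Psi x.
Proof. by move=> /has_sup_psum hs; apply: sup_upper_bound => //; exists n. Qed.

Lemma Psi_le x B : (forall n, psum x n <= B) -> Psi x <= B.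
Proof.
move=> hB; apply: ge_sup; first by exists (psum x 0), 0%N.
by move=> _ [n _ <-].
Qed.

Lemma Psi_ge0 x : Y x -> 0 <= Psi x.
Proof. by move=> hx; apply: le_trans (psum_le_Psi 0 hx); exact: psum_ge0. Qed.

Lemma nrmE x : nrm x = Psi x `^ p^-1.
Proof. by []. Qed.

Lemma lp_nrm_ge0 x : 0 <= nrm x.
Proof. exact: powR_ge0. Qed.

Lemma nrmPsi x : Y x -> nrm x `^ p = Psi x.
Proof. by move=> hx; rewrite nrmE powRK' // Psi_ge0. Qed.

Lemma nrm_le_of x e : 0 <= e -> (forall n, psum x n <= e `^ p) -> nrm x <= e.
Proof.
move=> e0 h; rewrite nrmE -(powRK e0); apply: powRi_le.
  by apply: Psi_ge0; exists (e `^ p).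
exact: Psi_le.
Qed.

Lemma coord_le x t : Y x -> absK (x t) <= nrm x.
Proof.
move=> hx; rewrite nrmE -(powRK (absK_ge0 hA (x t))); apply: powRi_le.
  exact: powR_ge0.
apply: le_trans (psum_le_Psi t.+1 hx); rewrite psumS lerDr; exact: psum_ge0.
Qed.

Lemma nrm0_eq x : Y x -> nrm x = 0 -> x = 0.
Proof.
move=> hx h0; apply/funext => t; apply: (absK_eq0 hA); apply/eqP.
by rewrite eq_le absK_ge0 // andbT -h0 coord_le.
Qed.

Lemma absK_powR0 : absK 0 `^ p = 0.
Proof. by rewrite absK0 // powR0 // p_neq0. Qed.

Lemma psum0 n : psum 0 n = 0.
Proof. by apply: big1 => i _; exact: absK_powR0. Qed.

Lemma lp_Y0 : Y 0.
Proof. by exists 0 => n; rewrite psum0. Qed.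

Lemma lp_nrm0 : nrm 0 = 0.
Proof.
apply/eqP; rewrite eq_le lp_nrm_ge0 andbT; apply: nrm_le_of => // n.
by rewrite psum0 powR_ge0.
Qed.

Lemma psumN x n : psum (- x) n = psum x n.
Proof. by apply: eq_bigr => i _; rewrite /= absKN. Qed.

Lemma lp_YN x : Y x -> Y (- x).
Proof. by case=> B hB; exists B => n; rewrite psumN. Qed.

Lemma lp_nrmN x : nrm (- x) = nrm x.
Proof.
rewrite /lp_norm; congr (sup _ `^ _); apply/funext => z /=.
by apply/propext; split => -[n _ <-]; exists n => //; rewrite psumN.
Qed.

Lemma powR_conv (l a b : R) : 0 <= l -> l <= 1 -> 0 <= a -> 0 <= b ->
  (l * a + (1 - l) * b) `^ p <= l * a `^ p + (1 - l) * b `^ p.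
Proof.
move=> l0 l1 a0 b0.
have := @convex_powR R p hp (Itv01 l0 l1) a b.
rewrite !inE /= !in_itv /= !andbT => /(_ a0 b0).
by rewrite !convRE /=.
Qed.

Lemma powR_divr a b : 0 <= a -> 0 < b -> (a / b) `^ p = a `^ p / b `^ p.
Proof.
move=> a0 b0; rewrite powRM ?invr_ge0 ?(ltW b0) //; congr (_ * _).
have h : b `^ p * b^-1 `^ p = 1.
  by rewrite -powRM ?invr_ge0 ?(ltW b0) // mulfV ?gt_eqF // powR1.
have bp0 : b `^ p != 0 by rewrite gt_eqF // powR_gt0.
by apply: (mulfI bp0); rewrite h mulfV.
Qed.

Lemma mink_key (al be : R) x y n : 0 < al -> 0 < be ->
  psum x n <= al `^ p -> psum y n <= be `^ p -> psum (x + y) n <= (al + be) `^ p.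
Proof.
move=> alp bep hxp hyp.
have abp : 0 < al + be := addr_gt0 alp bep.
pose l := al / (al + be).
have l0 : 0 <= l by rewrite divr_ge0 // ltW.
have l1 : l <= 1 by rewrite ler_pdivrMr // mul1r lerDl ltW.
have l1E : 1 - l = be / (al + be).
  by rewrite /l; field; rewrite gt_eqF.
pose c1 := (al + be) `^ p * l / al `^ p.
pose c2 := (al + be) `^ p * (1 - l) / be `^ p.
apply: (@le_trans _ _ (c1 * psum x n + c2 * psum y n)).
  rewrite /lp_psum !mulr_sumr -big_split /=; apply: ler_sum => m _.
  have xm0 := absK_ge0 hA (x m); have ym0 := absK_ge0 hA (y m).
  apply: (@le_trans _ _ ((absK (x m) + absK (y m)) `^ p)).
    by apply: powR_le; [exact: absK_ge0|exact: absKD].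
  have -> : absK (x m) + absK (y m) =
    (al + be) * (l * (absK (x m) / al) + (1 - l) * (absK (y m) / be)).
    rewrite l1E /l; field.
    by rewrite !gt_eqF.
  rewrite powRM ?(ltW abp) //; last first.
    by rewrite addr_ge0 // mulr_ge0 // ?subr_ge0 // divr_ge0 // ltW.
  apply: (@le_trans _ _ ((al + be) `^ p * (l * (absK (x m) / al) `^ p +
                          (1 - l) * (absK (y m) / be) `^ p))).
    rewrite ler_pM2l ?powR_gt0 //; apply: powR_conv => //;
      by rewrite divr_ge0 // ltW.
  rewrite !powR_divr // /c1 /c2 le_eqVlt; apply/orP; left; apply/eqP.
  field; by rewrite !gt_eqF ?powR_gt0.
have c10 : 0 <= c1.
  by apply: divr_ge0; [apply: mulr_ge0 => //; exact: powR_ge0|exact: powR_ge0].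
have c20 : 0 <= c2.
  apply: divr_ge0; [apply: mulr_ge0 => //|exact: powR_ge0].
    exact: powR_ge0.
  by rewrite subr_ge0.
apply: (@le_trans _ _ (c1 * al `^ p + c2 * be `^ p)).
  by apply: lerD; apply: ler_wpM2l.
have -> : c1 * al `^ p + c2 * be `^ p = (al + be) `^ p.
  by rewrite /c1 /c2; field; rewrite !gt_eqF ?powR_gt0.
exact: lexx.
Qed.

Lemma lp_minkowski x y : Y x -> Y y -> Y (x + y) /\ nrm (x + y) <= nrm x + nrm y.
Proof.
move=> hx hy.
have [ax0|ax0] := eqVneq (nrm x) 0.
  by rewrite (nrm0_eq hx ax0) add0r lp_nrm0 add0r.
have [by0|by0] := eqVneq (nrm y) 0.
  by rewrite (nrm0_eq hy by0) addr0 lp_nrm0 addr0.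
have alp : 0 < nrm x by rewrite lt_neqAle eq_sym ax0 lp_nrm_ge0.
have bep : 0 < nrm y by rewrite lt_neqAle eq_sym by0 lp_nrm_ge0.
have key : forall n, psum (x + y) n <= (nrm x + nrm y) `^ p.
  move=> n; apply: mink_key => //.
    by rewrite nrmPsi //; exact: psum_le_Psi.
  by rewrite nrmPsi //; exact: psum_le_Psi.
split; first by exists ((nrm x + nrm y) `^ p).
apply: nrm_le_of => //; exact: ltW (addr_gt0 alp bep).
Qed.

Lemma single_nrm x m0 : (forall m, m <> m0 -> x m = 0) -> Y x /\ nrm x = absK (x m0).
Proof.
move=> hx.
have hps : forall n, psum x n = if (m0 < n)%N then absK (x m0) `^ p else 0.
  move=> n; rewrite /lp_psum -(sum_single _ _ (fun m => absK (x m) `^ p)).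
  apply: eq_bigr => m _; case: eqP => [-> //|/eqP mne].
  by rewrite hx ?absK_powR0 //; apply/eqP.
have hb : forall n, psum x n <= absK (x m0) `^ p.
  by move=> n; rewrite hps; case: ifP => // _; exact: powR_ge0.
have hY : Y x by exists (absK (x m0) `^ p).
split => //; apply/eqP; rewrite eq_le; apply/andP; split.
  by apply: nrm_le_of => //; exact: absK_ge0.
rewrite nrmE -{1}(powRK (absK_ge0 hA (x m0))); apply: powRi_le; first exact: powR_ge0.
by have := psum_le_Psi m0.+1 hY; rewrite hps ltnSn.
Qed.

End LP.

Definition ev (P : nat -> Prop) := exists K, forall k, (K <= k)%N -> P k.

Lemma ev_and P Q : ev P -> ev Q -> ev (fun k => P k /\ Q k).
Proof.
move=> [K1 h1] [K2 h2]; exists (maxn K1 K2) => k hk; split.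
  by apply: h1; apply: leq_trans hk; exact: leq_maxl.
by apply: h2; apply: leq_trans hk; exact: leq_maxr.
Qed.

Lemma ev_all (I : finType) (P : I -> nat -> Prop) :
  (forall i, ev (P i)) -> ev (fun k => forall i, P i k).
Proof.
move=> h; have [Kf hK] := choice h.
exists (\max_i Kf i) => k hk i; apply: hK.
by apply: leq_trans hk; exact: leq_bigmax.
Qed.

Lemma ev_mono P Q : (forall k, P k -> Q k) -> ev P -> ev Q.
Proof. by move=> hPQ [K h]; exists K => k hk; apply: hPQ; apply: h. Qed.

Lemma ev_ge K0 : ev (fun k => (K0 <= k)%N).
Proof. by exists K0. Qed.

Lemma ev_ex P : ev P -> exists k, P k.
Proof. by move=> [K h]; exists K; apply: h. Qed.

Lemma tends0_ev (R : realType) (u : nat -> R) e :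
  (forall k, 0 <= u k) -> tends0 u -> 0 < e -> ev (fun k => u k < e).
Proof.
move=> u0 hu e0; have [K hK] := hu e e0; exists K => k /hK.
by rewrite ger0_norm.
Qed.

Lemma incr_pos (n : nat -> nat) k : incr_seq n -> (0 < n k)%N.
Proof.
move=> [h0 hS]; apply: leq_trans h0 _.
elim: k => // k IH; exact: leq_trans IH (ltnW (hS k)).
Qed.

Lemma incr_mono (n : nat -> nat) a b : incr_seq n -> (a <= b)%N -> (n a <= n b)%N.
Proof.
move=> [_ hS] /subnK <-; elim: (b - a)%N => // k IH.
by rewrite addSn; apply: leq_trans IH (ltnW (hS _)).
Qed.

Lemma incr_ge (n : nat -> nat) k : incr_seq n -> (k <= n k)%N.
Proof.
move=> [h0 hS]; elim: k => // k IH; exact: leq_ltn_trans IH (hS k).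
Qed.

Section Generic.
Variables (R : realType) (V : zmodType).

Record normish (Y : set V) (nrm : V -> R) : Prop := Normish {
 nY0 : Y 0;
 nYD : forall x y, Y x -> Y y -> Y (x + y);
 nYN : forall x, Y x -> Y (- x);
 nrm0 : nrm 0 = 0;
 nrmD : forall x y, Y x -> Y y -> nrm (x + y) <= nrm x + nrm y;
 nrmN : forall x, nrm (- x) = nrm x;
 nrm_ge0 : forall x, 0 <= nrm x }.

Definition additive_op (S : V -> V) := forall x y, S (x + y) = S x + S y.

Lemma add_op0 S : additive_op S -> S 0 = 0.
Proof.
move=> hS; have h := hS 0 0; rewrite addr0 in h.
by apply: (addrI (S 0)); rewrite addr0 -h.
Qed.

Lemma add_opN S : additive_op S -> forall x, S (- x) = - S x.
Proof.
move=> hS x; apply/eqP; rewrite -subr_eq0 opprK -hS addNr add_op0 //.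
Qed.

Lemma add_opB S : additive_op S -> forall x y, S (x - y) = S x - S y.
Proof. by move=> hS x y; rewrite hS add_opN. Qed.

Lemma add_op_iter S n : additive_op S -> additive_op (iter n S).
Proof.
move=> hS; elim: n => [//|n IH] x y /=.
by rewrite IH hS.
Qed.

Lemma add_op_sum S (I : finType) (F : I -> V) : additive_op S ->
  S (\sum_i F i) = \sum_i S (F i).
Proof.
move=> hS; apply: (big_ind2 (fun a b => S a = b)); first exact: add_op0.
  by move=> x1 x2 y1 y2 <- <-; rewrite hS.
by [].
Qed.

Variables (Y : set V) (nrm : V -> R).
Hypothesis hN : normish Y nrm.

Lemma nYB x y : Y x -> Y y -> Y (x - y).
Proof. by move=> hx hy; apply: (nYD hN) => //; apply: (nYN hN). Qed.

Lemma nrm_sum (I : finType) (F : I -> V) : (forall i, Y (F i)) ->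
  Y (\sum_i F i) /\ nrm (\sum_i F i) <= \sum_i nrm (F i).
Proof.
move=> hF; apply: (big_ind2 (fun a b => Y a /\ nrm a <= b)).
- split; first exact: (nY0 hN).
  by rewrite (nrm0 hN).
- move=> x1 x2 y1 y2 [hx1 hx2] [hy1 hy2]; split; first exact: (nYD hN).
  exact: le_trans (nrmD hN hx1 hy1) (lerD hx2 hy2).
- by move=> i _; split.
Qed.

Lemma nrm_sym x y : nrm (x - y) = nrm (y - x).
Proof. by rewrite -(nrmN hN) opprB. Qed.

Lemma nrm_tri x y z : Y x -> Y y -> Y z -> nrm (x - z) <= nrm (x - y) + nrm (y - z).
Proof.
move=> hx hy hz; have -> : x - z = (x - y) + (y - z) by rewrite addrA subrK.
by apply: (nrmD hN) => //; apply: nYB.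
Qed.

Definition ballY c r := fun y => Y y /\ nrm (y - c) < r.

Lemma ballY_open c r : Y c -> openY Y nrm (ballY c r).
Proof.
move=> hc; split; first by move=> y [].
move=> x [hx hxr]; exists (r - nrm (x - c)); first by rewrite subr_gt0.
move=> y hy hyx; split => //.
apply: le_lt_trans (nrm_tri hy hx hc) _.
by rewrite -ltrBrDr.
Qed.

Lemma ballY_ne c r : Y c -> 0 < r -> ballY c r !=set0.
Proof. by move=> hc r0; exists c; split => //; rewrite subrr (nrm0 hN). Qed.

Variables (N : nat) (S : 'I_N -> V -> V).
Hypothesis hSadd : forall i, additive_op (S i).
Hypothesis hSY : forall i x, Y x -> Y (S i x).

Lemma iterY i n x : Y x -> Y (iter n (S i) x).
Proof. by elim: n => // n IH /IH hx /=; apply: hSY. Qed.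

Definition BP (n : nat -> nat) (Y0 : set V) (Yj : 'I_N -> set V)
  (Sk : nat -> ('I_N -> V) -> V) :=
 forall e, 0 < e -> forall K (y0 : V) (y : 'I_N -> V), Y0 y0 -> (forall j, Yj j (y j)) ->
  exists k, (K <= k)%N /\ Y (Sk k y) /\ (forall i, nrm (iter (n k) (S i) y0) < e) /\
    nrm (Sk k y) < e /\ (forall i, nrm (iter (n k) (S i) (Sk k y) - y i) < e).

Lemma BP_dtt n Y0 Yj Sk : incr_seq n -> denseY Y nrm Y0 -> (forall j, denseY Y nrm (Yj j)) ->
  BP n Y0 Yj Sk -> d_top_transitive Y nrm S.
Proof.
move=> hn hY0 hYj hBP V0 U hV0 [v0 hv0] hU hUne.
have [hV0Y hV0o] := hV0.
have [e0 e0p he0] := hV0o v0 hv0.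
have hUi : forall i, exists ur : V * R, [/\ U i ur.1, 0 < ur.2 &
    forall z, Y z -> nrm (z - ur.1) < ur.2 -> U i z].
  move=> i; have [u hu] := hUne i; have [hUY hUo] := hU i.
  have [r r0 hr] := hUo u hu; by exists (u, r); split.
have [ur hur] := choice hUi.
pose e := \big[Num.min/e0]_i (ur i).2.
have ep : 0 < e.
  by apply: lt_bigmin => // i _; have [] := hur i.
have ee0 : e <= e0 by exact: bigmin_le_id.
have eei : forall i, e <= (ur i).2 by move=> i; exact: bigmin_le.
have e3 : 0 < e / 3 by rewrite divr_gt0.
have [y0 hy0 hy0v] := (proj2 hY0) v0 (hV0Y _ hv0) (e / 3) e3.
have hyi : forall j, exists y, Yj j y /\ nrm ((ur j).1 - y) < e / 3.
  move=> j; have [hYjY hYjd] := hYj j; have [hu _ _] := hur j.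
  have [hUY _] := hU j.
  have [y hy hyd] := hYjd (ur j).1 (hUY _ hu) (e / 3) e3; by exists y.
have [y hy] := choice hyi.
have [k [_ [hSkY [h1 [h2 h3]]]]] := hBP (e / 3) e3 0%N y0 y hy0 (fun j => proj1 (hy j)).
have y0Y : Y y0 by apply: (proj1 hY0).
have yY : forall j, Y (y j) by move=> j; apply: (proj1 (hYj j)); exact: (proj1 (hy j)).
have v0Y : Y v0 by exact: hV0Y.
exists (n k); split; first exact: incr_pos.
exists (y0 + Sk k y); split.
  apply: he0; first exact: (nYD hN).
  have -> : y0 + Sk k y - v0 = Sk k y + (y0 - v0) by rewrite addrAC addrC.
  apply: le_lt_trans (nrmD hN hSkY (nYB y0Y v0Y)) _.
  rewrite nrm_sym; move: hy0v h2 ee0 ep; lra.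
move=> i; have [hu _ hr] := hur i.
have hz : Y (y0 + Sk k y) by exact: (nYD hN).
apply: hr; first exact: iterY.
rewrite (add_op_iter _ (hSadd i)).
have -> : iter (n k) (S i) y0 + iter (n k) (S i) (Sk k y) - (ur i).1 =
  iter (n k) (S i) y0 + ((iter (n k) (S i) (Sk k y) - y i) + (y i - (ur i).1)).
  by rewrite -!addrA addKr.
have hA1 : Y (iter (n k) (S i) y0) by exact: iterY.
have hA2 : Y (iter (n k) (S i) (Sk k y) - y i) by apply: nYB => //; exact: iterY.
have hA3 : Y (y i - (ur i).1).
  by apply: nYB => //; have [hUY _] := hU i; exact: hUY.
apply: le_lt_trans (nrmD hN hA1 (nYD hN hA2 hA3)) _.
apply: (@le_lt_trans _ _ (nrm (iter (n k) (S i) y0) + (nrm (iter (n k) (S i) (Sk k y) - y i) +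
   nrm (y i - (ur i).1)))).
  by rewrite lerD2l; exact: (nrmD hN).
apply: lt_le_trans (eei i).
have h4 := proj2 (hy i); rewrite nrm_sym in h4.
have := h1 i; have := h3 i; lra.
Qed.

End Generic.

Lemma sum_delta (V : zmodType) (N : nat) (y : 'I_N -> V) (i : 'I_N) :
  \sum_j (if i == j then y j else 0) = y i.
Proof.
rewrite -big_mkcond /=.
rewrite (eq_bigl (fun j => j == i)); first exact: big_pred1_eq.
by move=> j; rewrite eq_sym.
Qed.

Lemma frac_lt (R : realType) (e : R) (M : nat) : 0 < e -> (e / (M%:R + 1)) *+ M < e.
Proof.
move=> e0; have M0 : 0 <= M%:R :> R by [].
rewrite -mulr_natl mulrA ltr_pdivrMr; last by rewrite ltr_wpDl.
rewrite mulrDr mulr1 mulrC ltrDl //.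
Qed.

Lemma tends0_of_ev (R : realType) (u : nat -> R) : (forall k, 0 <= u k) ->
  (forall e, 0 < e -> ev (fun k => u k < e)) -> tends0 u.
Proof.
move=> u0 h e e0; have [K hK] := h e e0; exists K => k hk.
by rewrite ger0_norm // hK.
Qed.

Section Generic2.
Variables (R : realType) (V : zmodType) (Y : set V) (nrm : V -> R).
Hypothesis hN : normish Y nrm.
Variables (N : nat) (S : 'I_N -> V -> V).
Hypothesis hSadd : forall i, additive_op (S i).
Hypothesis hSY : forall i x, Y x -> Y (S i x).

Definition DHCd n Y0 (Yj : 'I_N -> set V) (Sjk : 'I_N -> nat -> V -> V) :=
  incr_seq n /\ denseY Y nrm Y0 /\ (forall j, denseY Y nrm (Yj j)) /\
  (forall j k y, Yj j y -> Y (Sjk j k y)) /\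
  (forall i y, Y0 y -> tends0 (fun k => nrm (iter (n k) (S i) y))) /\
  (forall j y, Yj j y -> tends0 (fun k => nrm (Sjk j k y))) /\
  (forall i j y, Yj j y ->
        tends0 (fun k => nrm (iter (n k) (S i) (Sjk j k y) - (if i == j then y else 0)))).

Lemma DHC_DHCd : DHC Y nrm S <-> exists n Y0 Yj Sjk, DHCd n Y0 Yj Sjk.
Proof.
split.
  move=> [n [hn [Y0 [Yj [Sjk [h1 [h2 [h3 [h4 [h5 h6]]]]]]]]]].
  by exists n, Y0, Yj, Sjk.
move=> [n [Y0 [Yj [Sjk [hn [h1 [h2 [h3 [h4 [h5 h6]]]]]]]]]].
by exists n; split => //; exists Y0, Yj, Sjk.
Qed.

Definition SkH (Sjk : 'I_N -> nat -> V -> V) k (y : 'I_N -> V) := \sum_j Sjk j k (y j).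

Lemma DHCd_EBP n Y0 Yj Sjk : DHCd n Y0 Yj Sjk ->
  forall y, (forall j, Yj j (y j)) -> forall e, 0 < e ->
  ev (fun k => nrm (SkH Sjk k y) < e /\
     forall i, nrm (iter (n k) (S i) (SkH Sjk k y) - y i) < e).
Proof.
move=> [hn [h1 [h2 [h3 [h4 [h5 h6]]]]]] y hy e e0.
pose e' := e / (N%:R + 1).
have e'0 : 0 < e' by rewrite divr_gt0 // ltr_wpDl.
have yY : forall j, Y (y j) by move=> j; exact: (proj1 (h2 j) _ (hy j)).
have E1 : ev (fun k => forall j, nrm (Sjk j k (y j)) < e').
  apply: ev_all => j; apply: tends0_ev => //; first by move=> k; exact: (nrm_ge0 hN).
  exact: h5.
have E2 : ev (fun k => forall ij : 'I_N * 'I_N,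
    nrm (iter (n k) (S ij.1) (Sjk ij.2 k (y ij.2)) - (if ij.1 == ij.2 then y ij.2 else 0)) < e').
  apply: ev_all => ij; apply: tends0_ev => //; first by move=> k; exact: (nrm_ge0 hN).
  exact: h6.
apply: ev_mono (ev_and E1 E2) => k [H1 H2].
have hSY' : forall j, Y (Sjk j k (y j)) by move=> j; exact: h3.
split.
  have [_ hs] := nrm_sum hN hSY'.
  apply: le_lt_trans hs _; apply: le_lt_trans (frac_lt N e0).
  apply: (@le_trans _ _ (\sum_(j : 'I_N) e')).
    by apply: ler_sum => j _; exact: ltW.
  by rewrite sumr_const card_ord.
move=> i.
have -> : iter (n k) (S i) (SkH Sjk k y) - y i =
   \sum_j (iter (n k) (S i) (Sjk j k (y j)) - (if i == j then y j else 0)).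
  by rewrite sumrB (sum_delta y i) /SkH (add_op_sum _ (add_op_iter _ (hSadd i))).
have hT : forall j, Y (iter (n k) (S i) (Sjk j k (y j)) - (if i == j then y j else 0)).
  move=> j; apply: (nYB hN); first by apply: (iterY hSY); exact: h3.
  by case: (i == j) => //; exact: (nY0 hN).
have [_ hs] := nrm_sum hN hT.
apply: le_lt_trans hs _; apply: le_lt_trans (frac_lt N e0).
apply: (@le_trans _ _ (\sum_(j : 'I_N) e')).
  by apply: ler_sum => j _; apply: ltW; exact: (H2 (i, j)).
by rewrite sumr_const card_ord.
Qed.

Lemma DHCd_BP n Y0 Yj Sjk : DHCd n Y0 Yj Sjk -> BP Y nrm S n Y0 Yj (SkH Sjk).
Proof.
move=> hD e e0 K y0 y hy0 hy.
have [hn [h1 [h2 [h3 [h4 _]]]]] := hD.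
have E0 : ev (fun k => forall i, nrm (iter (n k) (S i) y0) < e).
  apply: ev_all => i; apply: tends0_ev => //; first by move=> k; exact: (nrm_ge0 hN).
  exact: h4.
have [k [[hk H0] [H1 H2]]] := ev_ex (ev_and (ev_and (ev_ge K) E0) (DHCd_EBP hD hy e0)).
exists k; split => //; split => //.
by apply: (proj1 (nrm_sum hN _)) => j; exact: h3.
Qed.

Lemma DHCd_dtt n Y0 Yj Sjk : DHCd n Y0 Yj Sjk -> d_top_transitive Y nrm S.
Proof.
move=> hD; have [hn [h1 [h2 _]]] := hD.
exact: (BP_dtt hN hSadd hSY hn h1 h2 (DHCd_BP hD)).
Qed.

Lemma DHCd_DBC n Y0 Sjk : DHCd n Y0 (fun _ => Y0) Sjk -> DBC Y nrm S.
Proof.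
move=> hD; have [hn [h1 [h2 [h3 [h4 _]]]]] := hD.
exists n; split => //; exists Y0, (SkH Sjk); split => //; split.
  by move=> k y hy; apply: (proj1 (nrm_sum hN _)) => j; exact: h3.
split => // e e0 K y hy.
have [k [hk [H1 H2]]] := ev_ex (ev_and (ev_ge K) (DHCd_EBP hD hy e0)).
by exists k.
Qed.

Lemma DBC_dtt : DBC Y nrm S -> d_top_transitive Y nrm S.
Proof.
move=> [n [hn [Y0 [Sk [h1 [h2 [h3 h4]]]]]]].
apply: (BP_dtt hN hSadd hSY hn h1 (fun _ => h1) (Sk := Sk)).
move=> e e0 K y0 y hy0 hy.
have [K1 hK1] : ev (fun k => forall i, nrm (iter (n k) (S i) y0) < e).
  apply: ev_all => i; apply: tends0_ev => //; first by move=> k; exact: (nrm_ge0 hN).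
  exact: h3.
have [k [hk [H1 H2]]] := h4 e e0 (maxn K K1) y hy.
exists k; split; first by apply: leq_trans hk; exact: leq_maxl.
split; first exact: h2.
split => //; apply: hK1; apply: leq_trans hk; exact: leq_maxr.
Qed.

End Generic2.

Section Dsum.
Variables (R : realType) (V : zmodType) (Y : set V) (nrm : V -> R).
Hypothesis hN : normish Y nrm.
Variable r : nat.
Local Notation dY := (dsumY Y r).
Local Notation dn := (dsum_nrm nrm r).

Lemma dsum_ge0 (x : {ffun 'I_r -> V}) : 0 <= dn x.
Proof. exact: bigmax_ge_id. Qed.

Lemma dsum_ge (x : {ffun 'I_r -> V}) j : nrm (x j) <= dn x.
Proof. exact: le_bigmax. Qed.

Lemma dsum_le (x : {ffun 'I_r -> V}) c : 0 <= c -> (forall j, nrm (x j) <= c) -> dn x <= c.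
Proof. by move=> c0 h; apply: bigmax_le. Qed.

Lemma dsum_lt (x : {ffun 'I_r -> V}) c : 0 < c -> (forall j, nrm (x j) < c) -> dn x < c.
Proof. by move=> c0 h; apply: bigmax_lt. Qed.

Lemma normish_dsum : normish dY dn.
Proof.
split.
- by move=> j; rewrite ffunE; exact: (nY0 hN).
- by move=> x y hx hy j; rewrite ffunE; exact: (nYD hN).
- by move=> x hx j; rewrite ffunE; exact: (nYN hN).
- apply/eqP; rewrite eq_le dsum_ge0 andbT; apply: dsum_le => // j.
  by rewrite ffunE (nrm0 hN).
- move=> x y hx hy; apply: dsum_le; first by apply: addr_ge0; exact: dsum_ge0.
  move=> j; rewrite ffunE; apply: le_trans (nrmD hN (hx j) (hy j)) _.
  by apply: lerD; exact: dsum_ge.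
- move=> x; apply/eqP; rewrite eq_le; apply/andP; split.
    by apply: dsum_le; [exact: dsum_ge0| move=> j; rewrite ffunE (nrmN hN); exact: dsum_ge].
  apply: dsum_le; first exact: dsum_ge0.
  by move=> j; rewrite -(nrmN hN) -[- x j](ffunE (fun j => - x j)); exact: dsum_ge.
- exact: dsum_ge0.
Qed.

Lemma dsum_add (S : V -> V) : additive_op S -> additive_op (dsum_op r S).
Proof. by move=> hS x y; apply/ffunP => j; rewrite !ffunE hS. Qed.

Lemma dsum_Y (S : V -> V) : (forall x, Y x -> Y (S x)) ->
  forall x, dY x -> dY (dsum_op r S x).
Proof. by move=> hS x hx j; rewrite ffunE; apply: hS. Qed.

Lemma dsum_iter (S : V -> V) n x : iter n (dsum_op r S) x = [ffun j => iter n S (x j)].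
Proof.
elim: n => [|n IH] /=; first by apply/ffunP => j; rewrite ffunE.
by rewrite IH; apply/ffunP => j; rewrite !ffunE.
Qed.

Lemma tends0_dsum (F : nat -> {ffun 'I_r -> V}) :
  (forall j, tends0 (fun k => nrm (F k j))) -> tends0 (fun k => dn (F k)).
Proof.
move=> h; apply: tends0_of_ev; first by move=> k; exact: dsum_ge0.
move=> e e0.
have E : ev (fun k => forall j, nrm (F k j) < e).
  apply: ev_all => j; apply: tends0_ev => //.
  by move=> k; exact: (nrm_ge0 hN).
by apply: ev_mono E => k hk; apply: dsum_lt.
Qed.

Lemma dense_dsum (D : set V) : denseY Y nrm D -> denseY dY dn (dsumY D r).
Proof.
move=> [hDY hD]; split; first by move=> x hx j; apply: hDY.
move=> x hx e e0.
have hc : forall j, exists y, D y /\ nrm (x j - y) < e.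
  by move=> j; have [y hy hyd] := hD (x j) (hx j) e e0; exists y.
have [yf hyf] := choice hc.
exists [ffun j => yf j]; first by move=> j; rewrite ffunE; exact: (proj1 (hyf j)).
by apply: dsum_lt => // j; rewrite !ffunE; exact: (proj2 (hyf j)).
Qed.

Variables (N : nat) (S : 'I_N -> V -> V).

Lemma DHCd_dsum n Y0 Yj Sjk : DHCd Y nrm S n Y0 Yj Sjk ->
  DHCd dY dn (fun i => dsum_op r (S i)) n (dsumY Y0 r) (fun j => dsumY (Yj j) r)
    (fun j k (y : {ffun 'I_r -> V}) => [ffun c => Sjk j k (y c)]).
Proof.
move=> [hn [h1 [h2 [h3 [h4 [h5 h6]]]]]].
split => //; split; first exact: dense_dsum.
split; first by move=> j; exact: dense_dsum.
split; first by move=> j k y hy c; rewrite ffunE; apply: h3.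
split.
  move=> i y hy; apply: tends0_dsum => j.
  under eq_fun do rewrite dsum_iter ffunE; exact: h4.
split.
  by move=> j y hy; apply: tends0_dsum => c; under eq_fun do rewrite ffunE; exact: h5.
move=> i j y hy; apply: tends0_dsum => c; rewrite /=.
have -> : (fun k => nrm ((iter (n k) (dsum_op r (S i)) [ffun c0 => Sjk j k (y c0)] -
      (if i == j then y else 0)) c)) =
    (fun k => nrm (iter (n k) (S i) (Sjk j k (y c)) - (if i == j then y c else 0))).
  apply: funext => k; rewrite dsum_iter !ffunE; case: (i == j) => //.
  by rewrite ffunE.
exact: h6.
Qed.

End Dsum.

Lemma sum_singleV (V : zmodType) (T : nat) (a : nat) (F : nat -> V) :
  \sum_(m < T) (if (m : nat) == a then F m else 0) = if (a < T)%N then F a else 0.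
Proof.
elim: T => [|T IH]; first by rewrite big_ord0.
rewrite big_ord_recr /= IH.
case: (ltnP a T) => [aT|Ta].
  by rewrite (ltn_trans aT (ltnSn T)) (gtn_eqF aT) addr0.
case: eqP => [->|/eqP aneq]; first by rewrite ltnSn add0r.
have -> : (a < T.+1)%N = false.
  by rewrite ltnS; apply/negbTE; rewrite -ltnNge ltn_neqAle aneq Ta.
by rewrite addr0.
Qed.

Section LPnormish.
Variables (R : realType) (K : fieldType) (absK : K -> R) (p : R).
Hypothesis hA : absP absK.
Hypothesis hp : 1 <= p.
Local Notation psum := (lp_psum absK p).
Local Notation Y := (in_lp absK p).
Local Notation nrm := (lp_norm absK p).

Lemma normish_lp : normish Y nrm.
Proof.
split.
- exact: lp_Y0.
- by move=> x y hx hy; have [] := lp_minkowski hA hp hx hy.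
- by move=> x hx; exact: lp_YN.
- exact: lp_nrm0.
- by move=> x y hx hy; have [] := lp_minkowski hA hp hx hy.
- exact: lp_nrmN.
- exact: lp_nrm_ge0.
Qed.

Definition single (a : nat) (c : K) : nat -> K := fun t => if t == a then c else 0.

Lemma single_Y a c : Y (single a c) /\ nrm (single a c) = absK c.
Proof.
have h : forall m, m <> a -> single a c m = 0.
  by move=> m /eqP hm; rewrite /single (negbTE hm).
have [h1 h2] := single_nrm hA hp h.
by split => //; rewrite h2 /single eqxx.
Qed.

Definition c00 (y : nat -> K) := exists B, forall t, (B <= t)%N -> y t = 0.

Lemma decomp y B : (forall t, (B <= t)%N -> y t = 0) ->
  y = \sum_(a < B) single a (y a).
Proof.
move=> hy; apply/funext => t; rewrite fct_sumE.
rewrite (eq_bigr (fun a : 'I_B => if (a : nat) == t then y a else 0)); last first.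
  by move=> a _; rewrite /single eq_sym; case: eqP => // ->.
rewrite sum_singleV; case: ltnP => // /hy; done.
Qed.

Lemma c00_Y y : c00 y -> Y y.
Proof.
move=> [B hB]; rewrite (decomp hB).
by apply: (proj1 (nrm_sum normish_lp _)) => a; exact: (proj1 (single_Y _ _)).
Qed.

Lemma nrm_lt_of x c e : 0 < e -> (forall n, psum x n <= c) -> c < e `^ p -> nrm x < e.
Proof.
move=> e0 hc ce.
have c0 : 0 <= c by exact: le_trans (psum_ge0 _ _ x 0) (hc 0%N).
apply: le_lt_trans (nrm_le_of hp (x := x) (e := c `^ p^-1) _ _) _.
- exact: powR_ge0.
- by move=> n; rewrite powRK' //.
rewrite -(powRK hp (ltW e0)); apply: powRi_lt => //.
Qed.

Lemma c00_dense : denseY Y nrm c00.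
Proof.
split; first by move=> y; exact: c00_Y.
move=> x hx e e0.
have ep : 0 < e `^ p by rewrite powR_gt0.
have [_ [B _ <-] hB] := sup_adherent ep (has_sup_psum hx).
pose y := fun t => if (t < B)%N then x t else 0.
exists y; first by exists B => t hBt; rewrite /y ltnNge hBt.
pose z := x - y.
have hz : forall t, z t = if (t < B)%N then 0 else x t.
  move=> t; rewrite /z; change (x t - y t = (if (t < B)%N then 0 else x t)).
  by rewrite /y; case: ifP => _; rewrite ?subrr ?subr0.
have hz0 : forall n, (n <= B)%N -> psum z n = 0.
  elim=> [|n IH] hn; first by rewrite /lp_psum big_ord0.
  rewrite psumS IH ?(ltnW hn) // hz hn absK_powR0 // addr0 //.
have hzB : forall n, (B <= n)%N -> psum z n = psum x n - psum x B.
  move=> n /subnK <-; elim: (n - B)%N => [|k IH]; first by rewrite add0n hz0 // subrr.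
  by rewrite addSn !psumS IH hz ltnNge leq_addl /= addrAC.
apply: (nrm_lt_of e0 (c := Psi absK p x - psum x B)).
  move=> n; case: (leqP n B) => hn.
    by rewrite hz0 // subr_ge0; exact: psum_le_Psi.
  rewrite hzB ?(ltnW hn) // lerD2r; exact: psum_le_Psi.
by rewrite ltrBlDr -ltrBlDl.
Qed.

End LPnormish.

Section Shift.
Variables (R : realType) (K : fieldType) (absK : K -> R) (p : R).
Hypothesis hA : absP absK.
Hypothesis hp : 1 <= p.
Local Notation psum := (lp_psum absK p).
Local Notation Y := (in_lp absK p).
Local Notation nrm := (lp_norm absK p).
Variables (f : nat -> nat) (w : nat -> K).
Hypothesis hd : pseudo_shift_data absK f w.
Local Notation T := (pseudo_shift f w).
Local Notation W := (Wprod f w).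

Lemma f_ge m : (m < f m)%N.
Proof.
have [hinc [h0 _]] := hd.
elim: m => // m IH; exact: leq_ltn_trans IH (hinc m).
Qed.

Lemma f_lt a b : (a < b)%N -> (f a < f b)%N.
Proof.
have [hinc _] := hd.
by apply: (homo_ltn (r := fun x y => (x < y)%N)) => //; exact: ltn_trans.
Qed.

Lemma f_inj : injective f.
Proof.
move=> a b hab; case: (ltngtP a b) => [h|h|//]; have := f_lt h; by rewrite hab ltnn.
Qed.

Lemma iter_ge n m : (m + n <= iter n f m)%N.
Proof.
elim: n => [|n IH] /=; first by rewrite addn0.
by rewrite addnS; apply: leq_ltn_trans IH (f_ge _).
Qed.

Lemma iter_inj n : injective (iter n f).
Proof. elim: n => // n IH a b /= /f_inj; exact: IH. Qed.

Lemma T_add : additive_op T.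
Proof. by move=> x y; apply/funext => m; rewrite /pseudo_shift /= mulrDr. Qed.

Lemma WS m n : W m n.+1 = w (f m) * W (f m) n.
Proof.
rewrite /Wprod big_nat_recl //; congr (_ * _).
by apply: eq_bigr => i _; rewrite -iterSr.
Qed.

Lemma iterT n x m : iter n T x m = W m n * x (iter n f m).
Proof.
elim: n m => [|n IH] m /=; first by rewrite /Wprod big_geq // mul1r.
rewrite /pseudo_shift IH WS mulrA; congr (_ * x _).
by rewrite -iterSr.
Qed.

Lemma W_neq0 m n : W m n != 0.
Proof.
have [_ [_ [_ hw]]] := hd.
elim: n m => [|n IH] m; first by rewrite /Wprod big_geq // oner_eq0.
by rewrite WS mulf_neq0.
Qed.

Lemma sum_f_le (g : nat -> R) n : (forall t, 0 <= g t) ->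
  \sum_(m < n) g (f m) <= \sum_(t < f n) g t.
Proof.
move=> g0; elim: n => [|n IH]; first by rewrite big_ord0 sumr_ge0.
rewrite big_ord_recr /=.
apply: (@le_trans _ _ (\sum_(t < (f n).+1) g t)).
  by rewrite big_ord_recr /= lerD2r.
have hle : ((f n).+1 <= f n.+1)%N by apply: f_lt.
rewrite -(subnK hle) addnC; elim: (f n.+1 - (f n).+1)%N => [|k IHk].
  by rewrite addn0.
rewrite addnS [in X in _ <= X]big_ord_recr /=; apply: le_trans IHk _; by rewrite lerDl.
Qed.

Lemma T_Y x : Y x -> Y (T x).
Proof.
move=> hx; have [_ [_ [[B hB] _]]] := hd.
have B0 : 0 <= B by apply: le_trans (hB 0%N); exact: absK_ge0.
exists (B `^ p * Psi absK p x) => n.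
rewrite /lp_psum.
apply: (@le_trans _ _ (\sum_(m < n) B `^ p * absK (x (f m)) `^ p)).
  apply: ler_sum => m _; rewrite /pseudo_shift absKM // powRM ?absK_ge0 //.
  by apply: ler_wpM2r; [exact: powR_ge0|apply: powR_le => //; exact: absK_ge0].
rewrite -mulr_sumr; apply: ler_wpM2l; first exact: powR_ge0.
have /= h := @sum_f_le (fun t => absK (x t) `^ p) n (fun t => powR_ge0 _ _).
apply: le_trans h _; exact: psum_le_Psi.
Qed.

(* right inverse *)
Definition Sinv n (y : nat -> K) : nat -> K :=
  fun t => \sum_(a < t.+1) (if iter n f a == t then y a / W a n else 0).

Lemma Sinv_add n : additive_op (Sinv n).
Proof.
move=> x y; apply/funext => t.
change (Sinv n (x + y) t = Sinv n x t + Sinv n y t).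
rewrite /Sinv -big_split /=.
by apply: eq_bigr => a _; case: ifP => _; rewrite ?addr0 // mulrDl.
Qed.

Lemma Sinv_single n a c : Sinv n (single a c) = single (iter n f a) (c / W a n).
Proof.
apply/funext => t; rewrite /Sinv /single.
case: eqP => [->|/eqP ht].
  rewrite (eq_bigr (fun b : 'I_(iter n f a).+1 => if (b : nat) == a then c / W a n else 0)).
    rewrite (@sum_singleV _ _ a (fun _ => c / W a n)) ltnS; have := iter_ge n a; rewrite leq_eqVlt.
    by case/orP => [/eqP <-|/ltnW/(leq_trans (leq_addr _ _)) ->] //; rewrite leq_addr.
  move=> b _; case: eqP => [/iter_inj -> |/eqP hb]; first by rewrite eqxx.
  by case: eqP => [hba|] //; rewrite hba eqxx in hb.
apply: big1 => b _; case: eqP => // hb; case: eqP => [hba|_]; last by rewrite mul0r.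
by rewrite -hb hba eqxx in ht.
Qed.

Lemma iterT_single n b c : iter n T (single b c) =
  fun m => if iter n f m == b then W m n * c else 0.
Proof.
apply/funext => m; rewrite iterT /single; case: eqP => _ //; exact: mulr0.
Qed.

Lemma iterT_c00 n y : (forall t, (n <= t)%N -> y t = 0) -> iter n T y = 0.
Proof.
move=> hy; apply/funext => m; rewrite iterT hy ?mulr0 //.
exact: leq_trans (leq_addl _ _) (iter_ge n m).
Qed.

Lemma Sinv_decomp n y B : (forall t, (B <= t)%N -> y t = 0) ->
  Sinv n y = \sum_(a < B) single (iter n f a) (y a / W a n).
Proof.
move=> hy; rewrite {1}(decomp hy).
have hS := Sinv_add n.
rewrite (add_op_sum _ hS); apply: eq_bigr => a _; exact: Sinv_single.
Qed.

Lemma Sinv_Y n y : c00 y -> Y (Sinv n y).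
Proof.
move=> [B hB]; rewrite (Sinv_decomp n hB).
apply: (proj1 (nrm_sum (normish_lp hA hp) _)) => a.
exact: (proj1 (single_Y hA hp _ _)).
Qed.

Lemma TSinv n y : c00 y -> iter n T (Sinv n y) = y.
Proof.
move=> [B hB]; rewrite (Sinv_decomp n hB) (add_op_sum _ (add_op_iter n T_add)).
rewrite [RHS](decomp hB); apply: eq_bigr => a _.
rewrite iterT_single; apply/funext => m; rewrite /single.
case: eqP => [/iter_inj ->|hm]; first by rewrite eqxx mulrC divfK ?W_neq0.
by case: eqP => // hma; rewrite hma in hm.
Qed.

End Shift.

Lemma absKV (R : realType) (K : fieldType) (absK : K -> R) (hA : absP absK) (a : K) :
  absK a^-1 = (absK a)^-1.
Proof.
have [->|a0] := eqVneq a 0; first by rewrite invr0 (absK0 hA) invr0.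
have h : absK a * absK a^-1 = 1 by rewrite -(absKM hA) mulfV // (absK1 hA).
have ha0 : absK a != 0 by apply/eqP => /(absK_eq0 hA) /eqP; rewrite (negbTE a0).
by apply: (mulfI ha0); rewrite h mulfV.
Qed.

Lemma tends0_bound (R : realType) (u : nat -> R) (C : R) (B : nat) :
  (forall k, 0 <= u k) -> (forall k, (B <= k)%N -> u k <= C / k.+1%:R) -> tends0 u.
Proof.
move=> u0 hu; have C0 : 0 <= C.
  have := le_trans (u0 B) (hu B (leqnn B)).
  by rewrite pmulr_lge0 // invr_gt0 ltr0Sn.
move=> e e0; pose K0 := maxn B (Num.Def.archi_bound (C / e)).
exists K0 => k hk; rewrite ger0_norm //.
apply: le_lt_trans (hu k (leq_trans (leq_maxl _ _) hk)) _.
rewrite ltr_pdivrMr ?ltr0Sn // mulrC -ltr_pdivrMr //.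
apply: lt_le_trans (archi_boundP _) _; first by rewrite divr_ge0 // ltW.
rewrite ler_nat; apply: leq_trans (leq_maxr B _) _; exact: leq_trans hk (leqnSn k).
Qed.

Section IV.
Variables (R : realType) (K : fieldType) (absK : K -> R) (p : R).
Hypothesis hA : absP absK.
Hypothesis hp : 1 <= p.
Local Notation psum := (lp_psum absK p).
Local Notation Y := (in_lp absK p).
Local Notation nrm := (lp_norm absK p).
Variables (N : nat) (f : 'I_N -> nat -> nat) (w : 'I_N -> nat -> K).
Hypothesis hf : forall i, pseudo_shift_data absK (f i) (w i).
Local Notation T := (fun i => pseudo_shift (f i) (w i)).

Definition good (n : nat -> nat) k k' :=
  (forall i (m : 'I_k.+1), k.+1%:R < absK (Wprod (f i) (w i) m (n k'))) /\
  (forall i l : 'I_N, i != l ->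
     (forall a b, (a < k.+1)%N -> (b < k.+1)%N ->
            iter (n k') (f l) a <> iter (n k') (f i) b) /\
     (forall a b, (a < k.+1)%N -> (k.+1 <= b)%N ->
            iter (n k') (f l) a = iter (n k') (f i) b ->
            absK (Wprod (f i) (w i) b (n k') / Wprod (f l) (w l) a (n k')) < (k.+1%:R)^-1)).

Lemma sub_good (n : nat -> nat) : incr_seq n ->
  (forall (i : 'I_N) (m : nat) (B : R), exists K0 : nat, forall k, (K0 <= k)%N ->
       B < absK (Wprod (f i) (w i) m (n k))) ->
  (forall e : R, 0 < e -> forall K0 M : nat, exists k, (K0 <= k)%N /\
     forall i l : 'I_N, i != l ->
       (forall a b, (a < M)%N -> (b < M)%N ->
            iter (n k) (f l) a <> iter (n k) (f i) b) /\
       (forall a b, (a < M)%N -> (M <= b)%N ->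
            iter (n k) (f l) a = iter (n k) (f i) b ->
            absK (Wprod (f i) (w i) b (n k) / Wprod (f l) (w l) a (n k)) < e)) ->
  exists phi : nat -> nat, (forall k, (phi k < phi k.+1)%N) /\ forall k, good n k (phi k).
Proof.
move=> hn ha hb.
have hg : forall kK : nat * nat, exists k', (kK.2 <= k')%N /\ good n kK.1 k'.
  move=> [k K0] /=.
  have E : ev (fun k' => forall im : 'I_N * 'I_k.+1,
      k.+1%:R < absK (Wprod (f im.1) (w im.1) im.2 (n k'))).
    by apply: ev_all => -[i m]; exact: ha.
  have [K1 hK1] := E.
  have e0 : 0 < (k.+1%:R : R)^-1 by rewrite invr_gt0 ltr0Sn.
  have [k' [hk' hb']] := hb _ e0 (maxn K0 K1) k.+1.
  exists k'; split; first exact: leq_trans (leq_maxl _ _) hk'.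
  split => //; move=> i m.
  by have := hK1 k' (leq_trans (leq_maxr _ _) hk') (i, m).
have [g hgP] := choice hg.
pose phi := fix phi k := match k with 0 => g (0, 0)%N | k'.+1 => g (k'.+1, (phi k').+1) end.
exists phi; split.
  by move=> k; have [h _] := hgP (k.+1, (phi k).+1).
by case=> [|k]; [have [_ h] := hgP (0, 0)%N|have [_ h] := hgP (k.+1, (phi k).+1)].
Qed.

End IV.

Section IV2.
Variables (R : realType) (K : fieldType) (absK : K -> R) (p : R).
Hypothesis hA : absP absK.
Hypothesis hp : 1 <= p.
Local Notation psum := (lp_psum absK p).
Local Notation Y := (in_lp absK p).
Local Notation nrm := (lp_norm absK p).
Variables (N : nat) (f : 'I_N -> nat -> nat) (w : 'I_N -> nat -> K).
Hypothesis hf : forall i, pseudo_shift_data absK (f i) (w i).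
Local Notation T := (fun i => pseudo_shift (f i) (w i)).
Local Notation hN := (normish_lp hA hp).

Lemma bound_Sinv (n : nat -> nat) k j y B : good absK f w n k k -> (B <= k)%N ->
  (forall t, (B <= t)%N -> y t = 0) ->
  nrm (Sinv (f j) (w j) (n k) y) <= (\sum_(a < B) absK (y a)) / k.+1%:R.
Proof.
move=> [hg1 _] hBk hy.
rewrite (Sinv_decomp (hf j) _ hy).
have hS : forall a : 'I_B, Y (single (iter (n k) (f j) a) (y a / Wprod (f j) (w j) a (n k))).
  by move=> a; exact: (proj1 (single_Y hA hp _ _)).
apply: le_trans (proj2 (nrm_sum hN hS)) _.
rewrite mulr_suml; apply: ler_sum => a _.
rewrite (proj2 (single_Y hA hp _ _)) (absKM hA) (absKV hA).
apply: ler_wpM2l; first exact: (absK_ge0 hA).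
have ak : (a < k.+1)%N by apply: leq_trans (ltn_ord a) _; exact: leq_trans hBk (leqnSn k).
have h := hg1 j (Ordinal ak); rewrite /= in h.
rewrite lef_pV2 ?posrE ?ltr0Sn //; first exact: ltW.
exact: lt_trans (ltr0Sn _ _) h.
Qed.

Lemma bound_cross (n : nat -> nat) k i j y B : good absK f w n k k -> (B <= k)%N -> i != j ->
  (forall t, (B <= t)%N -> y t = 0) ->
  nrm (iter (n k) (T i) (Sinv (f j) (w j) (n k) y)) <= (\sum_(a < B) absK (y a)) / k.+1%:R.
Proof.
move=> [_ hg2] hBk hij hy.
have [hdis hrat] := hg2 i j hij.
rewrite (Sinv_decomp (hf j) _ hy) (add_op_sum _ (add_op_iter _ (T_add (f i) (w i)))).
have hz : forall a : 'I_B,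
    Y (iter (n k) (T i) (single (iter (n k) (f j) a) (y a / Wprod (f j) (w j) a (n k)))) /\
    nrm (iter (n k) (T i) (single (iter (n k) (f j) a) (y a / Wprod (f j) (w j) a (n k))))
      <= absK (y a) / k.+1%:R.
  move=> a; rewrite iterT_single.
  set c := y a / Wprod (f j) (w j) a (n k).
  case: (pselect (exists m0, iter (n k) (f i) m0 = iter (n k) (f j) a)) => [[m0 hm0]|hno].
    have hsupp : forall m, m <> m0 -> (fun m => if iter (n k) (f i) m == iter (n k) (f j) a
        then Wprod (f i) (w i) m (n k) * c else 0) m = 0.
      move=> m hm /=; case: eqP => // hm'; exfalso; apply: hm.
      exact: (iter_inj (hf i) (etrans hm' (esym hm0))).
    have [h1 h2] := single_nrm hA hp hsupp.
    split => //; rewrite h2 /= hm0 eqxx.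
    have ak : (a < k.+1)%N by apply: leq_trans (ltn_ord a) _; exact: leq_trans hBk (leqnSn k).
    have m0k : (k.+1 <= m0)%N.
      rewrite leqNgt; apply/negP => hm0k; exact: (hdis a m0 ak hm0k (esym hm0)).
    have hr := hrat a m0 ak m0k (esym hm0).
    rewrite /c mulrCA (absKM hA); apply: ler_wpM2l; first exact: (absK_ge0 hA).
    exact: ltW.
  have -> : (fun m => if iter (n k) (f i) m == iter (n k) (f j) a
        then Wprod (f i) (w i) m (n k) * c else 0) = 0.
    apply/funext => m /=; case: eqP => // hm; exfalso; apply: hno; by exists m.
  split; first exact: (nY0 hN).
  rewrite (nrm0 hN); apply: divr_ge0; [exact: (absK_ge0 hA)|exact: ler0n].
apply: le_trans (proj2 (nrm_sum hN (fun a => proj1 (hz a)))) _.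
rewrite mulr_suml; apply: ler_sum => a _; exact: (proj2 (hz a)).
Qed.

Lemma iv_DHCd : cond_iv absK f w ->
  exists n Sjk, DHCd Y nrm T n (c00 (K := K)) (fun _ => c00 (K := K)) Sjk.
Proof.
move=> [n [hn [ha hb]]].
have [phi [hphi hgood]] := sub_good hn ha hb.
pose n' k := n (phi k).
have hn' : incr_seq n'.
  split; first exact: (incr_pos (phi 0%N) hn).
  move=> k; rewrite /n'; have [_ hS] := hn.
  exact: leq_trans (hS (phi k)) (incr_mono hn (hphi k)).
have hgood' : forall k, good absK f w n' k k by move=> k; exact: hgood.
exists n', (fun j k y => Sinv (f j) (w j) (n' k) y).
split => //; split; first exact: c00_dense.
split; first by move=> _; exact: c00_dense.
split; first by move=> j k y hy; exact: Sinv_Y.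
split.
  move=> i y [B hB] e e0; exists B => k hk.
  rewrite (iterT_c00 (hf i) (n := n' k) (y := y)); first by rewrite (nrm0 hN) normr0.
  move=> t ht; apply: hB; apply: leq_trans hk (leq_trans (incr_ge k hn') ht).
split.
  move=> j y [B hB]; apply: (tends0_bound (C := \sum_(a < B) absK (y a)) (B := B)).
    by move=> k; exact: (nrm_ge0 hN).
  by move=> k hk; exact: bound_Sinv.
move=> i j y [B hB].
have [<-|hij] := eqVneq i j.
  move=> e e0; exists 0%N => k _.
  by rewrite (TSinv (hf i)) ?subrr ?(nrm0 hN) ?normr0 //; exists B.
rewrite ?(negbTE hij).
apply: (tends0_bound (C := \sum_(a < B) absK (y a)) (B := B)).
  by move=> k; exact: (nrm_ge0 hN).
by move=> k hk; rewrite subr0; exact: bound_cross.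
Qed.

End IV2.

Section Alg.
Variables (R : realType) (K : fieldType) (absK : K -> R).
Hypothesis hA : absP absK.

Lemma absKB a b : absK (a - b) = absK (b - a).
Proof. by rewrite -(absKN hA) opprB. Qed.

Lemma absK_ge_sub a b : absK a - absK (a - b) <= absK b.
Proof.
have := absKD hA (a - b) b; rewrite subrK => h.
by rewrite lerBlDl; apply: le_trans h _; rewrite lerD2r.
Qed.

Lemma disj_alg (A B C D ci cl : K) (eta Nr : R) : A * D = B * C ->
  absK (A - 1) < eta -> absK (B - 1) < eta -> absK (C - cl) < eta -> absK (D - ci) < eta ->
  absK ci <= Nr -> absK cl <= Nr -> eta <= 1 ->
  absK (ci - cl) < eta * (2 * Nr + 4).
Proof.
move=> hABCD hA1 hB1 hC hD hci hcl eta1.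
have -> : ci - cl = (ci - D) + ((1 - A) * D + ((B - 1) * C + (C - cl))).
  have -> : (1 - A) * D + ((B - 1) * C + (C - cl)) = D - A * D + B * C - cl.
    by ring.
  by rewrite hABCD; ring.
have hDb : absK D <= Nr + 1.
  have := absKD hA (D - ci) ci; rewrite subrK => h.
  apply: le_trans h _; move: hD hci eta1; lra.
have hCb : absK C <= Nr + 1.
  have := absKD hA (C - cl) cl; rewrite subrK => h.
  apply: le_trans h _; move: hC hcl eta1; lra.
have t1 : absK (ci - D) < eta by rewrite absKB.
have t2 : absK ((1 - A) * D) <= eta * (Nr + 1).
  rewrite (absKM hA) absKB.
  by apply: ler_pM; [exact: (absK_ge0 hA)|exact: (absK_ge0 hA)|exact: ltW hA1|exact: hDb].
have t3 : absK ((B - 1) * C) <= eta * (Nr + 1).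
  rewrite (absKM hA).
  by apply: ler_pM; [exact: (absK_ge0 hA)|exact: (absK_ge0 hA)|exact: ltW hB1|exact: hCb].
have s1 := absKD hA (ci - D) ((1 - A) * D + ((B - 1) * C + (C - cl))).
have s2 := absKD hA ((1 - A) * D) ((B - 1) * C + (C - cl)).
have s3 := absKD hA ((B - 1) * C) (C - cl).
apply: le_lt_trans s1 _.
have : eta * (2 * Nr + 4) = eta + (eta * (Nr + 1) + (eta * (Nr + 1) + eta)) by ring.
move=> ->; apply: ltr_leD => //.
apply: le_trans s2 _; apply: lerD => //.
apply: le_trans s3 _; apply: lerD => //; exact: ltW.
Qed.

Lemma absK_nat_diff (i l : nat) : i != l -> 1 <= absK (i%:R - l%:R : K).
Proof.
wlog il : i l / (l < i)%N.
  move=> hw hil; case: (ltngtP l i) => [h|h|h].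
  - exact: hw.
  - by rewrite absKB; apply: hw => //; rewrite eq_sym.
  - by rewrite h eqxx in hil.
move=> _; rewrite -natrB ?(ltnW il) // (absKn hA) ler1n subn_gt0 //.
Qed.

End Alg.

Section Nec.
Variables (R : realType) (K : fieldType) (absK : K -> R) (p : R).
Hypothesis hA : absP absK.
Hypothesis hp : 1 <= p.
Local Notation psum := (lp_psum absK p).
Local Notation Y := (in_lp absK p).
Local Notation nrm := (lp_norm absK p).
Variables (N : nat) (f : 'I_N -> nat -> nat) (w : 'I_N -> nat -> K).
Hypothesis hf : forall i, pseudo_shift_data absK (f i) (w i).
Local Notation T := (fun i => pseudo_shift (f i) (w i)).
Local Notation hN := (normish_lp hA hp).
Local Notation dY := (dsumY Y 2).
Local Notation dn := (dsum_nrm nrm 2).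
Local Notation hdN := (normish_dsum hN 2).
Local Notation W i := (Wprod (f i) (w i)).

Definition tg (M : nat) (c : 'I_2) (i : 'I_N) : nat -> K :=
  fun t => if (t < M)%N then (if c == ord0 then 1 else (i : nat).+1%:R) else 0.

Lemma tg_Y M c i : Y (tg M c i).
Proof. by apply: (c00_Y hA hp); exists M => t ht; rewrite /tg ltnNge ht. Qed.

Lemma coord_dsum (z : {ffun 'I_2 -> nat -> K}) c t : dY z -> absK (z c t) <= dn z.
Proof.
move=> hz; apply: (le_trans (coord_le hA hp t (hz c))); exact: dsum_ge.
Qed.

Lemma stage (M : nat) (L eps : R) : (0 < M)%N -> 0 <= L -> 0 < eps -> eps <= 1 ->
  d_weakly_mixing Y nrm T ->
  exists n, (0 < n)%N /\ (forall i m, (m < M)%N -> L < absK (W i m n)) /\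
  (forall i l : 'I_N, i != l ->
     (forall a b, (a < M)%N -> (b < M)%N -> iter n (f l) a <> iter n (f i) b) /\
     (forall a b, (a < M)%N -> (M <= b)%N -> iter n (f l) a = iter n (f i) b ->
        absK (W i b n / W l a n) < eps)).
Proof.
move=> M0 L0 e0 e1 hdw.
pose eta := eps / (2 * N%:R + 6).
have hden : 0 < 2 * N%:R + 6 :> R by rewrite ltr_wpDl // mulr_ge0.
have eta0 : 0 < eta by rewrite divr_gt0.
have etaN : eta * (2 * N%:R + 6) = eps by rewrite /eta divfK // gt_eqF.
have eta_half : eta <= 2^-1.
  rewrite /eta ler_pdivrMr //; apply: le_trans e1 _; move: (ler0n R N); lra.
have eta_eps : 2 * eta <= eps.
  rewrite -etaN; have := ler0n R N; move: eta0; nra.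
pose del := (2 * (L + 1))^-1.
have del0 : 0 < del by rewrite invr_gt0; move: L0; lra.
pose u i : {ffun 'I_2 -> nat -> K} := [ffun c => tg M c i].
have uY : forall i, dY (u i) by move=> i c; rewrite ffunE; exact: tg_Y.
have zY : dY 0 by exact: (nY0 hdN).
have [n [n0 [y [[yY yd] hU]]]] := hdw (ballY dY dn 0 del) (fun i => ballY dY dn (u i) eta)
  (ballY_open hdN del zY) (ballY_ne hdN zY del0)
  (fun i => ballY_open hdN eta (uY i)) (fun i => ballY_ne hdN (uY i) eta0).
rewrite subr0 in yd.
have hy : forall c t, absK (y c t) <= del.
  by move=> c t; apply: ltW; apply: le_lt_trans (coord_dsum c t yY) yd.
have hP : forall c i m, absK (W i m n * y c (iter n (f i) m) - tg M c i m) < eta.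
  move=> c i m; have [hUY hUd] := hU i.
  have hz : dY (iter n (dsum_op 2 (T i)) y - u i) by apply: (nYB hdN) => //.
  apply: le_lt_trans hUd; apply: le_trans (coord_dsum c m hz).
  rewrite dsum_iter !ffunE /=; rewrite -iterT; exact: lexx.
exists n; split => //; split.
  move=> i m hm; have := hP ord0 i m; rewrite /tg hm eqxx => h.
  set A := W i m n * _ in h.
  have hA1 : 1 - eta <= absK A.
    have := absK_ge_sub hA 1 A; rewrite (absK1 hA) absKB // => h2.
    move: h h2; lra.
  have hAle : absK A <= absK (W i m n) * del.
    rewrite /A (absKM hA); apply: ler_wpM2l; [exact: (absK_ge0 hA)|exact: hy].
  have hW0 := absK_ge0 hA (W i m n).
  have : 1 - eta <= absK (W i m n) * del by exact: le_trans hA1 hAle.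
  rewrite -ler_pdivrMr // /del invrK => h3.
  apply: lt_le_trans h3; move: eta_half L0; nra.
move=> i l hil; split.
  move=> a b ha hb hab.
  have h1 := hP ord0 l a; have h2 := hP ord0 i b.
  have h3 := hP (Ordinal (isT : (1 < 2)%N)) l a; have h4 := hP (Ordinal (isT : (1 < 2)%N)) i b.
  rewrite /tg ha hb eqxx /= in h1 h2 h3 h4.
  rewrite hab in h1 h3.
  have hci : absK ((i : nat).+1%:R : K) <= N%:R by rewrite (absKn hA) ler_nat.
  have hcl : absK ((l : nat).+1%:R : K) <= N%:R by rewrite (absKn hA) ler_nat.
  have eta1 : eta <= 1 by move: eta_half; lra.
  have hne : ((i : nat).+1 != (l : nat).+1)%N by rewrite eqSS.
  have hd1 := absK_nat_diff hA hne.
  have hsmall : eta * (2 * N%:R + 4) < 1.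
    have : eta * (2 * N%:R + 4) = eps - 2 * eta by rewrite -etaN; ring.
    move=> ->; move: e1 eta0; lra.
  suff : absK ((i : nat).+1%:R - (l : nat).+1%:R : K) < eta * (2 * N%:R + 4).
    by move: hd1 hsmall; lra.
  apply: (disj_alg hA _ h1 h2 h3 h4 hci hcl eta1); ring.
move=> a b ha hb hab.
have h1 := hP ord0 l a; have h2 := hP ord0 i b.
rewrite /tg ha eqxx /= in h1; rewrite /tg ltnNge hb /= subr0 in h2.
rewrite hab in h1.
set Z := absK (y ord0 (iter n (f i) b)).
have hZ0 : 0 <= Z by exact: (absK_ge0 hA).
have hY1 : 1 - eta <= absK (W l a n) * Z.
  rewrite -(absKM hA); have := absK_ge_sub hA 1 (W l a n * y ord0 (iter n (f i) b)).
  rewrite (absK1 hA) (absKB hA 1) => h; move: h h1; lra.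
have hX : absK (W i b n) * Z < eta by rewrite -(absKM hA).
have hYv : 0 < absK (W l a n).
  rewrite lt_neqAle (absK_ge0 hA) andbT; apply/eqP => h0.
  by move: hY1; rewrite -h0 mul0r; move: eta_half; lra.
rewrite (absKM hA) (absKV hA) ltr_pdivrMr //.
have hX0 := absK_ge0 hA (W i b n).
move: hX hY1 hZ0 eta_eps eta_half eta0 hYv hX0; nra.
Qed.


End Nec.

Section Nec2.
Variables (R : realType) (K : fieldType) (absK : K -> R) (p : R).
Hypothesis hA : absP absK.
Hypothesis hp : 1 <= p.
Local Notation Y := (in_lp absK p).
Local Notation nrm := (lp_norm absK p).
Variables (N : nat) (f : 'I_N -> nat -> nat) (w : 'I_N -> nat -> K).
Hypothesis hf : forall i, pseudo_shift_data absK (f i) (w i).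
Local Notation T := (fun i => pseudo_shift (f i) (w i)).
Local Notation W i := (Wprod (f i) (w i)).

Lemma dwm_iv : (0 < N)%N -> d_weakly_mixing Y nrm T -> cond_iv absK f w.
Proof.
move=> N0 hdw.
pose i0 : 'I_N := Ordinal N0.
have st : forall kp : nat * nat, exists n, (kp.2 < n)%N /\
    (forall i m, (m < kp.1.+1)%N -> kp.1.+1%:R < absK (W i m n)) /\
    (forall i l : 'I_N, i != l ->
     (forall a b, (a < kp.1.+1)%N -> (b < kp.1.+1)%N -> iter n (f l) a <> iter n (f i) b) /\
     (forall a b, (a < kp.1.+1)%N -> (kp.1.+1 <= b)%N -> iter n (f l) a = iter n (f i) b ->
        absK (W i b n / W l a n) < (kp.1.+1%:R)^-1)).
  move=> [k prev] /=.
  pose L := Num.max (k.+1%:R : R) (\big[Num.max/0]_(n' < prev.+1) absK (W i0 0%N n')).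
  have L0 : 0 <= L by rewrite le_max ler0n.
  have e0 : 0 < (k.+1%:R : R)^-1 by rewrite invr_gt0 ltr0Sn.
  have e1 : (k.+1%:R : R)^-1 <= 1 by rewrite invf_le1 ?ltr0Sn // ler1n.
  have [n [n0 [hW hdr]]] := stage hA hp (ltn0Sn k) L0 e0 e1 hdw.
  exists n; split.
    rewrite ltnNge; apply/negP => hn.
    have h1 := hW i0 0%N (ltn0Sn k).
    have h2 : absK (W i0 0%N n) <= L.
      rewrite le_max; apply/orP; right.
      by have := le_bigmax 0 (fun n' : 'I_prev.+1 => absK (W i0 0%N n')) (Ordinal (n := prev.+1) (m := n) hn).
    by move: h1 h2; lra.
  split => // i m hm; apply: le_lt_trans (hW i m hm).
  by rewrite le_max lexx.
have [g hg] := choice st.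
pose nn := fix nn k := match k with 0 => g (0, 0)%N | k'.+1 => g (k'.+1, nn k') end.
have hnn : forall k, exists prev, nn k = g (k, prev).
  by case=> [|k]; [exists 0%N|exists (nn k)].
have hP : forall k,
    (forall i m, (m < k.+1)%N -> k.+1%:R < absK (W i m (nn k))) /\
    (forall i l : 'I_N, i != l ->
     (forall a b, (a < k.+1)%N -> (b < k.+1)%N -> iter (nn k) (f l) a <> iter (nn k) (f i) b) /\
     (forall a b, (a < k.+1)%N -> (k.+1 <= b)%N -> iter (nn k) (f l) a = iter (nn k) (f i) b ->
        absK (W i b (nn k) / W l a (nn k)) < (k.+1%:R)^-1)).
  by move=> k; have [prev ->] := hnn k; have [_ h] := hg (k, prev).
exists nn; split.
  split; first by have [h _] := hg (0, 0)%N.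
  by move=> k; have [h _] := hg (k.+1, nn k).
split.
  move=> i m B; pose K0 := maxn m (Num.Def.archi_bound (Num.max B 0)).
  exists K0 => k hk; have [h1 _] := hP k.
  apply: le_lt_trans (h1 i m _); last first.
    by rewrite ltnS; exact: leq_trans (leq_maxl _ _) hk.
  apply: (@le_trans _ _ (Num.max B 0)); first by rewrite le_max lexx.
  apply: ltW; apply: lt_le_trans (archi_boundP _) _; first by rewrite le_max lexx orbT.
  rewrite ler_nat; apply: leq_trans (leq_maxr m _) _; exact: leq_trans hk (leqnSn k).
move=> e e0 K0 M.
pose k := maxn K0 (maxn M (Num.Def.archi_bound e^-1)).
exists k; split; first exact: leq_maxl.
have hMk : (M <= k)%N := leq_trans (leq_maxl M _) (leq_maxr K0 _).
have hAk : (Num.Def.archi_bound e^-1 <= k)%N := leq_trans (leq_maxr M _) (leq_maxr K0 _).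
have hek : e^-1 < k.+1%:R.
  apply: lt_le_trans (archi_boundP _) _; first by rewrite invr_ge0 ltW.
  by rewrite ler_nat; exact: leq_trans hAk (leqnSn k).
move=> i l hil; have [_ h2] := hP k; have [hd hr] := h2 i l hil; split.
  move=> a b ha hb; apply: hd.
    by apply: leq_trans ha _; exact: leq_trans hMk (leqnSn k).
  by apply: leq_trans hb _; exact: leq_trans hMk (leqnSn k).
move=> a b ha hb hab.
have hak : (a < k.+1)%N by apply: leq_trans ha _; exact: leq_trans hMk (leqnSn k).
case: (ltnP b k.+1) => hbk; first by exfalso; exact: hd a b hak hbk hab.
apply: lt_le_trans (hr a b hak hbk hab) _.
rewrite -(invrK e) lef_pV2 ?posrE ?ltr0Sn ?invr_gt0 //; exact: ltW.
Qed.

End Nec2.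

Local Close Scope classical_set_scope.

Theorem theorem2p8 (R : realType) (K : fieldType) (absK : K -> R)
    (hK : is_R_or_C absK)
    (p : R) (N : nat) (f : 'I_N -> nat -> nat) (w : 'I_N -> nat -> K) :
  1 <= p -> (2 <= N)%N ->
  (forall i, pseudo_shift_data absK (f i) (w i)) ->
  let T := fun i => pseudo_shift (f i) (w i) in
  let Y := in_lp absK p in
  let nrm := lp_norm absK p in
  [<-> d_weakly_mixing Y nrm T;
       DHC Y nrm T;
       forall r : nat, (0 < r)%N ->
         DBC (dsumY Y r) (dsum_nrm nrm r) (fun i => dsum_op r (T i));
       cond_iv absK f w].
Proof.
move=> hp hN2 hf T Y nrm.
have hA := absP_of hK.
have hNl : normish Y nrm := normish_lp hA hp.
have hTadd : forall i, additive_op (T i) := fun i => T_add (f i) (w i).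
have hTY : forall i x, Y x -> Y (T i x) := fun i x hx => T_Y hA hp (hf i) hx.
have N0 : (0 < N)%N by apply: leq_trans hN2.
have i_iv : d_weakly_mixing Y nrm T -> cond_iv absK f w := dwm_iv hA hp N0.
have iv_D : cond_iv absK f w -> exists n Sjk,
    DHCd Y nrm T n (c00 (K := K)) (fun _ => c00 (K := K)) Sjk := iv_DHCd hA hp hf.
have iv_ii : cond_iv absK f w -> DHC Y nrm T.
  move=> /iv_D [n [Sjk hD]]; apply/DHC_DHCd.
  by exists n, (c00 (K := K)), (fun _ => c00 (K := K)), Sjk.
have ii_i : DHC Y nrm T -> d_weakly_mixing Y nrm T.
  move=> /DHC_DHCd [n [Y0 [Yj [Sjk hD]]]].
  have hD2 := DHCd_dsum hNl 2 hD.
  apply: (DHCd_dtt (normish_dsum hNl 2) _ _ hD2).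
    by move=> i; exact: (dsum_add (hTadd i)).
  by move=> i; exact: (dsum_Y (hTY i)).
have iv_iii : cond_iv absK f w -> forall r : nat, (0 < r)%N ->
    DBC (dsumY Y r) (dsum_nrm nrm r) (fun i => dsum_op r (T i)).
  move=> /iv_D [n [Sjk hD]] r _.
  have hDr := DHCd_dsum hNl r hD.
  apply: (DHCd_DBC (normish_dsum hNl r) _ _ hDr).
    by move=> i; exact: (dsum_add (hTadd i)).
  by move=> i; exact: (dsum_Y (hTY i)).
have iii_i : (forall r : nat, (0 < r)%N ->
    DBC (dsumY Y r) (dsum_nrm nrm r) (fun i => dsum_op r (T i))) -> d_weakly_mixing Y nrm T.
  move=> h; have h2 := h 2%N isT.
  apply: (DBC_dtt (normish_dsum hNl 2) _ _ h2).
    by move=> i; exact: (dsum_add (hTadd i)).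
  by move=> i; exact: (dsum_Y (hTY i)).
tfae.
- by move=> h; apply: iv_ii; exact: i_iv.
- by move=> h; apply: iv_iii; apply: i_iv; exact: ii_i.
- by move=> h; apply: i_iv; exact: iii_i.
- by move=> h; apply: ii_i; exact: iv_ii.
Qed.
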